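(* Let $n$ be a positive integer, $f:\mathbb{Z}_n\to\mathbb C$, and $m,l\le n$ positive integers. Then \[\sum_{r\in\mathbb{Z}_n}|\widehat f(r)|^2\cdot\min\left(\frac{m^2\gcd(r,n)}{n},\,m\right)\le\sum_{1\le k\le l:\ k\mid n}\frac{m^2\phi(k)}{k}G_f(n/k)+\sum_{l<k\le n:\ k\mid n}\frac{mn}{k}G_f(n/k).\]
   Context: The Fourier transform is $\widehat f(s)=\sum_{x\in\mathbb{Z}_n}f(x)e^{-2\pi i xs/n}$. For $r\in\mathbb{Z}_n$, $\gcd(r,n)$ is computed from any integer representative (so $\gcd(0,n)=n$). For a positive divisor $r$ of $n$ and $a\in\mathbb{Z}_n$, $g_f(a,r)=\sum_{x\in\mathbb{Z}_n:\,x=a+jr\text{ for some }j\in\mathbb{Z}_n}f(x)$ and $G_f(r)=\sum_{a=0}^{r-1}|g_f(a,r)|^2$. $\phi$ is Euler's totient function. *)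

(* Defs.v *)
From HB Require Import structures.
From mathcomp Require Import all_boot all_order all_algebra.
From Stdlib Require Rdefinitions.
From mathcomp Require Import reals Rstruct trigo.
From mathcomp Require Import complex.
Set Implicit Arguments. Unset Strict Implicit. Unset Printing Implicit Defensive.
Import Order.TTheory GRing.Theory Num.Theory.
Local Open Scope ring_scope.

Local Notation C := (complex.complex Rdefinitions.R).

Definition expi (t : Rdefinitions.R) : C := complex.Complex (cos t) (sin t).

Definition sqnorm (z : C) : Rdefinitions.R := complex.Re z ^+ 2 + complex.Im z ^+ 2.

(* Z_n is represented by 'I_n (n > 0); f : Z_n -> C *)
Definition fourier (n : nat) (f : 'I_n -> C) (s : 'I_n) : C :=
  \sum_(x < n) f x * expi (- (2 * pi * (x%:R * s%:R) / n%:R)).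

Definition gf (n : nat) (f : 'I_n -> C) (a r : nat) : C :=
  \sum_(x < n | [exists j : 'I_n, (x : nat) == modn (addn a (muln j r)) n]) f x.

Definition Gf (n : nat) (f : 'I_n -> C) (r : nat) : Rdefinitions.R :=
  \sum_(0 <= a < r) sqnorm (gf f a r).

(* Main.v *)
Require Import Defs.
From HB Require Import structures.
From mathcomp Require Import all_boot all_order all_algebra.
From Stdlib Require Rdefinitions.
From mathcomp Require Import reals Rstruct trigo.
From mathcomp Require Import complex.
From mathcomp Require Import ring lra zify.
From mathcomp Require cyclic.
Import Order.TTheory GRing.Theory Num.Theory.
Local Open Scope ring_scope.
Local Notation "x %:C" := (complex.real_complex Rdefinitions.R x).

Local Notation R := Rdefinitions.R.
Local Notation C := (complex.complex Rdefinitions.R).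

Lemma sqnormE (z : C) : (sqnorm z)%:C = z * z^*.
Proof.
case: z => a b; rewrite /sqnorm /=; apply/eqP; rewrite eq_complex /=; apply/andP; split; apply/eqP; ring.
Qed.

Lemma expiD a b : expi (a + b) = expi a * expi b.
Proof. rewrite /expi cosD sinD; apply/eqP; rewrite eq_complex /=; apply/andP; split; apply/eqP; ring. Qed.

Lemma expi0 : expi 0 = 1.
Proof. by rewrite /expi cos0 sin0. Qed.

Lemma expiN a : expi (- a) = (expi a)^*.
Proof. by rewrite /expi cosN sinN. Qed.

Lemma expiJ a : expi a * (expi a)^* = 1.
Proof. by rewrite -sqnormE /sqnorm /= cos2Dsin2. Qed.

Lemma expi2pi : expi (2 * pi) = 1.
Proof. by rewrite /expi mulr_natl cos2pi sin2pi. Qed.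

Lemma expi_nat a N : expi (a * N%:R) = expi a ^+ N.
Proof.
elim: N => [|N IH]; first by rewrite mulr0 expi0 expr0.
by rewrite -addn1 natrD mulrDr mulr1 expiD IH exprD expr1.
Qed.

Lemma expi_neq1 a : 0 < a < 2 * pi -> expi a != 1.
Proof.
move=> /andP[a0 a2]; apply/negP=> /eqP E.
have : cos a = 1 by move/eqP: E; rewrite /expi eq_complex /= => /andP[/eqP -> _].
have ea : a = (a / 2) *+ 2 by rewrite mulr2n; field.
rewrite [in cos a]ea cos_mulr2n => h.
have h2 : cos (a / 2) ^+ 2 = 1 by move: h; rewrite mulr2n; lra.
have : `|cos (a/2)| = 1.
  by apply/eqP; rewrite -(@eqrXn2 _ 2) // ?normr_ge0 // real_normK ?num_real // h2 expr1n.
move/cos1sin0; apply/eqP; rewrite gt_eqF // sin_gt0_pi //; apply/andP; split; lra.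
Qed.

Lemma w_prim n : (0 < n)%N -> n.-primitive_root (expi (2 * pi / n%:R)).
Proof.
move=> n0; set w := expi _.
have nR : (n%:R : R) != 0 by rewrite pnatr_eq0 -lt0n.
have wn : w ^+ n = 1 by rewrite /w -expi_nat divfK // expi2pi.
have [m pm mn] := prim_order_exists n0 wn.
have m0 := prim_order_gt0 pm.
have mle := dvdn_leq n0 mn.
case: (ltngtP m n) => [mlt|nm|emn]; last by rewrite -emn.
  2: by move: nm; rewrite ltnNge mle.
have := prim_expr_order pm; rewrite /w -expi_nat => /eqP; apply/contraLR => _.
have pi0 : (0:R) < pi := pi_gt0 _.
have n0R : (0 : R) < n%:R by rewrite ltr0n.
have m0R : (0 : R) < m%:R by rewrite ltr0n.
have mnR : (m%:R : R) < n%:R by rewrite ltr_nat.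
apply: expi_neq1; apply/andP; split.
  by rewrite !mulr_gt0 // ?invr_gt0.
rewrite mulrAC ltr_pdivrMr // ltr_pM2l //; lra.
Qed.

Lemma orth (s : nat) (v : C) c : s.-primitive_root v ->
  \sum_(t < s) (v ^+ c) ^+ t = if (s %| c)%N then s%:R else 0.
Proof.
move=> pv; case: ifP => [/dvdnP[q ->]|nd].
  rewrite mulnC exprM (prim_expr_order pv) expr1n.
  by rewrite (eq_bigr (fun _ => 1)) ?sumr_const ?card_ord // => i _; rewrite expr1n.
have u1 : v ^+ c - 1 != 0 by rewrite subr_eq0 -(prim_order_dvd pv) nd.
apply/eqP; rewrite -(mulrI_eq0 _ (lregP u1)) -subrX1.
by rewrite -exprM mulnC exprM (prim_expr_order pv) expr1n subrr.
Qed.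

Lemma conj_pow (v : C) s j : s.-primitive_root v -> v * v^* = 1 -> (j <= s)%N ->
  (v ^+ j)^* = v ^+ (s - j).
Proof.
move=> pv hv js.
have e1 : v ^+ (s - j) * v ^+ j = 1 by rewrite -exprD subnK // prim_expr_order.
have e2 : v ^+ j * (v ^+ j)^* = 1 by rewrite rmorphXn -exprMn hv expr1n.
by rewrite -[LHS]mul1r -e1 -mulrA [_ ^+ j * _]e2 mulr1.
Qed.

Lemma dvd_diff s a b : (a < s)%N -> (b < s)%N -> (s %| s - a + b)%N = (a == b).
Proof.
move=> ha hb; case: (ltngtP a b) => h.
- have -> : (s - a + b = s + (b - a))%N by lia.
  rewrite dvdn_addr // ; apply/negbTE; apply/negP=> /dvdn_leq; lia.
- apply/negbTE; apply/negP=> /dvdn_leq; lia.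
- by rewrite h subnK ?dvdnn // ltnW.
Qed.

Lemma parseval s (v : C) (g : nat -> C) : s.-primitive_root v -> v * v^* = 1 ->
  \sum_(t < s) ((\sum_(a < s) g a * (v ^+ (a * t))^*) *
                (\sum_(a < s) g a * (v ^+ (a * t))^*)^*)
  = s%:R * \sum_(a < s) g a * (g a)^*.
Proof.
move=> pv hv.
have H1 : forall t : 'I_s, (\sum_(a < s) g a * (v ^+ (a * t))^*) *
                (\sum_(a < s) g a * (v ^+ (a * t))^*)^*
   = \sum_(a < s) \sum_(b < s) g a * (g b)^* * (v ^+ (s - a + b)) ^+ t.
  move=> t; rewrite rmorph_sum big_distrl /=; apply: eq_bigr => a _.
  rewrite big_distrr /=; apply: eq_bigr => b _.
  have cp : (v ^+ a)^* = v ^+ (s - a) := @conj_pow v s a pv hv (ltnW (ltn_ord a)).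
  rewrite rmorphM /= conjCK !exprM rmorphXn /=.
  rewrite cp.
  rewrite exprD exprMn. ring.
rewrite (eq_bigr _ (fun t _ => H1 t)) exchange_big /= mulr_sumr.
apply: eq_bigr => a _; rewrite exchange_big /=.
rewrite (bigD1 a) //= [X in _ + X]big1 ?addr0.
  by rewrite -mulr_sumr orth // dvd_diff // eqxx mulrC.
move=> b nb; rewrite -mulr_sumr orth // dvd_diff // ifF ?mulr0 //; apply/negbTE; by rewrite eq_sym.
Qed.

Lemma reindex (H : nat -> R) k s n : (0 < k)%N -> n = (k * s)%N ->
  \sum_(0 <= r < n | (k %| r)%N) H r = \sum_(0 <= t < s) H (k * t)%N.
Proof.
move=> k0 ->; elim: s => [|s IH]; first by rewrite muln0 !big_geq.
rewrite big_nat_recr //= -IH mulnS addnC (big_cat_nat _ (leq_addr _ _)) //=; congr (_ + _).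
rewrite big_ltn_cond; last by lia.
rewrite dvdn_mulr // big_nat_cond big1 ?addr0 //.
move=> r /andP[/andP[h1 h2] h3]; exfalso; move: h3.
have -> : r = (k * s + (r - k * s))%N by lia.
rewrite dvdn_addr ?dvdn_mulr // => /dvdn_leq; lia.
Qed.

Lemma gsplit n (f : 'I_n -> C) s (h : nat -> C) : (0 < s)%N ->
  \sum_(x < n) f x * h (x %% s)%N = \sum_(a < s) (\sum_(x < n | (x %% s == a)%N) f x) * h a.
Proof.
move=> s0.
rewrite (partition_big (fun x : 'I_n => Ordinal (ltn_pmod x s0)) xpredT) //=.
apply: eq_bigr => a _; rewrite big_distrl /=; apply: eq_big => x.
  by rewrite -val_eqE.
by move=> /eqP <-.
Qed.

Lemma gf_eq n (f : 'I_n -> C) s a : (0 < s)%N -> (s %| n)%N -> (a < s)%N ->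
  gf f a s = \sum_(x < n | (x %% s == a)%N) f x.
Proof.
move=> s0 sn ha; rewrite /gf; apply: eq_bigl => x.
apply/existsP/idP.
  case=> j /eqP ->; rewrite modn_dvdm // addnC modnMDl modn_small //.
have xn := ltn_ord x.
move=> /eqP xa; have jn : (x %/ s < n)%N by apply: leq_ltn_trans (leq_div _ _) xn.
exists (Ordinal jn); rewrite /= -xa addnC -divn_eq modn_small //.
Qed.

Lemma keyP n (f : 'I_n -> C) k : (0 < n)%N -> (0 < k)%N -> (k %| n)%N ->
  \sum_(r < n | (k %| r)%N) sqnorm (fourier f r) = (n %/ k)%:R * Gf f (n %/ k).
Proof.
move=> n0 k0 kn.
set s := (n %/ k)%N.
have ns : n = (k * s)%N by rewrite /s mulnC divnK.
have s0 : (0 < s)%N by rewrite /s divn_gt0 // dvdn_leq.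
have sn : (s %| n)%N by rewrite [in X in (_ %| X)%N]ns dvdn_mull.
have ks : (n %/ s = k)%N by rewrite [in X in (X %/ _)%N]ns mulnK.
have nR : (n%:R : R) != 0 by rewrite pnatr_eq0 -lt0n.
set w := expi (2 * pi / n%:R).
have pw : n.-primitive_root w := w_prim n n0.
set v := w ^+ (n %/ s).
have pv : s.-primitive_root v := dvdn_prim_root pw sn.
have hv : v * v^* = 1 by rewrite /v rmorphXn -exprMn expiJ expr1n.
pose g := fun a => \sum_(x < n | (x %% s == a)%N) f x.
pose Fn N := \sum_(x < n) f x * expi (- (2 * pi * ((x : nat)%:R * N%:R) / n%:R)).
have -> : \sum_(r < n | (k %| r)%N) sqnorm (fourier f r)
        = \sum_(0 <= r < n | (k %| r)%N) sqnorm (Fn r) by rewrite big_mkord.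
rewrite (reindex _ _ _ _ k0 ns).
have F2 : forall t, Fn (k * t)%N = \sum_(a < s) g a * (v ^+ (a * t))^*.
  move=> t; rewrite /Fn /g.
  rewrite (eq_bigr (fun x : 'I_n => f x * (fun a => (v ^+ (a * t))^*) ((x : nat) %% s)%N)).
    exact: (gsplit _ f s (fun a => (v ^+ (a * t))^*) s0).
  move=> x _ /=; congr (_ * _).
  rewrite -(prim_expr_mod pv) modnMml (prim_expr_mod pv) /v -exprM ks.
  rewrite expiN -expi_nat; congr (expi _)^*.
  by rewrite !natrM; field.
have G1 : Gf f s = \sum_(a < s) sqnorm (g a).
  rewrite /Gf big_mkord; apply: eq_bigr => a _; by rewrite gf_eq.
rewrite G1 big_mkord; apply: complexI.
rewrite rmorphM rmorph_sum rmorph_sum /= rmorph_nat.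
under eq_bigr do rewrite sqnormE F2.
rewrite parseval //; congr (_ * _); apply: eq_bigr => a _; by rewrite sqnormE.
Qed.

Lemma swap n (P : nat -> bool) (a : nat -> R) (S : 'I_n -> R) lo hi :
  \sum_(lo <= k < hi | P k) \sum_(r < n | (k %| r)%N) a k * S r
  = \sum_(r < n) S r * \sum_(lo <= k < hi | P k && (k %| r)%N) a k.
Proof.
under eq_bigr do rewrite big_mkcond.
rewrite exchange_big /=; apply: eq_bigr => r _.
rewrite big_distrr /= [RHS]big_mkcond [LHS]big_mkcond /=; apply: eq_bigr => k _.
by case: (P k); case: (k %| r)%N => //=; rewrite ?mulr0 // mulrC.
Qed.

Lemma W1_eq n m d l : (0 < d)%N -> (d <= l)%N ->
  \sum_(1 <= k < l.+1 | (k %| d)%N) (m ^ 2 * totient k)%:R / n%:R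
  = (m ^ 2 * d)%:R / (n%:R : R).
Proof.
move=> d0 dl.
rewrite (big_cat_nat _ (n := d.+1)) //= [X in _ + X]big1_seq ?addr0; last first.
  move=> k /andP[kd]; rewrite mem_index_iota => /andP[h1 h2]; exfalso.
  by move: (dvdn_leq d0 kd); lia.
rewrite -mulr_suml -natr_sum -big_distrr /=; congr ((_ * _)%:R / _)%N.
have := cyclic.sum_totient_dvd d; rewrite -(big_mkord (fun k => (k %| d)%N) totient) big_ltn_cond // dvd0n.
by rewrite gtn_eqF.
Qed.

Theorem lemma4p6 (n : nat) (f : 'I_n -> complex.complex Rdefinitions.R)
    (m l : nat) :
  (0 < n)%nat -> (0 < m)%nat -> (m <= n)%nat -> (0 < l)%nat -> (l <= n)%nat ->
  \sum_(r < n) sqnorm (fourier f r) *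
      Num.min ((m ^ 2 * gcdn r n)%:R / n%:R) (m%:R : Rdefinitions.R)
  <= \sum_(1 <= k < l.+1 | (k %| n)%nat)
        ((m ^ 2 * totient k)%:R / k%:R) * Gf f (n %/ k)
   + \sum_(l.+1 <= k < n.+1 | (k %| n)%nat)
        ((m * n)%:R / k%:R) * Gf f (n %/ k).
Proof.
move=> n0 m0 mn l0 ln.
pose S := fun r : 'I_n => sqnorm (fourier f r).
have Sge0 r : 0 <= S r by rewrite /S /sqnorm addr_ge0 // sqr_ge0.
have nR : (n%:R : R) != 0 by rewrite pnatr_eq0 -lt0n.
have E1 : \sum_(1 <= k < l.+1 | (k %| n)%nat)
        ((m ^ 2 * totient k)%:R / k%:R) * Gf f (n %/ k)
   = \sum_(1 <= k < l.+1 | (k %| n)%nat) \sum_(r < n | (k %| r)%N)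
        (m ^ 2 * totient k)%:R / n%:R * S r.
  rewrite big_nat_cond [RHS]big_nat_cond; apply: eq_bigr => k /andP[/andP[k1 _] kn].
  have kR : (k%:R : R) != 0 by rewrite pnatr_eq0 -lt0n.
  rewrite -mulr_sumr keyP // natr_div // ?unitfE //; field.
  by rewrite kR nR.
have E2 : \sum_(l.+1 <= k < n.+1 | (k %| n)%nat)
        ((m * n)%:R / k%:R) * Gf f (n %/ k)
   = \sum_(l.+1 <= k < n.+1 | (k %| n)%nat) \sum_(r < n | (k %| r)%N)
        m%:R * S r.
  rewrite big_nat_cond [RHS]big_nat_cond; apply: eq_bigr => k /andP[/andP[k1 _] kn].
  have k0 : (0 < k)%N by apply: leq_ltn_trans k1.
  have kR : (k%:R : R) != 0 by rewrite pnatr_eq0 -lt0n.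
  rewrite -mulr_sumr keyP // natr_div // ?unitfE // natrM; field.
  by [].
rewrite E1 E2 !(swap n (fun k => (k %| n)%N)) -big_split /=.
apply: ler_sum => r _; rewrite -mulrDr; apply: ler_wpM2l; first exact: (Sge0 r).
set d := gcdn r n.
have cond : forall k, ((k %| n) && (k %| r))%N = (k %| d)%N.
  by move=> k; rewrite dvdn_gcd andbC.
under [X in _ + X]eq_bigl do rewrite cond.
have d0 : (0 < d)%N by rewrite gcdn_gt0 n0 orbT.
have dn : (d <= n)%N by apply: dvdn_leq n0 (dvdn_gcdr _ _).
have W1 : 0 <= \sum_(1 <= k < l.+1 | (k %| d)%N) (m ^ 2 * totient k)%:R / (n%:R : R).
  by apply: sumr_ge0 => k _; rewrite divr_ge0.
have W2 : 0 <= \sum_(l.+1 <= k < n.+1 | (k %| d)%N) (m%:R : R).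
  by apply: sumr_ge0 => k _.
rewrite [X in _ <= X + _](eq_bigl (fun k => (k %| d)%N)); last by move=> k; exact: cond.
case: (leqP d l) => dl.
  rewrite W1_eq // ge_min; apply/orP; left; rewrite lerDl //.
rewrite ge_min; apply/orP; right.
rewrite [X in _ <= _ + X](big_cat_nat _ (n := d)) /=; [|exact: dl|exact: leqW].
rewrite [X in _ <= _ + (_ + X)]big_ltn_cond ?dvdnn //.
have A : 0 <= \sum_(l.+1 <= i < d | (i %| d)%N) (m%:R : R) by apply: sumr_ge0.
have B : 0 <= \sum_(d.+1 <= i < n.+1 | (i %| d)%N) (m%:R : R) by apply: sumr_ge0.
lra.
Qed.
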